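(* Let $w=0$ in the dynamical system described in the context. Let $(\Sigma_+,\Sigma_A,\Sigma_B,\Sigma_C,v_{(1)},v_{(2)},\Omega_{(1)},\Omega_{(2)})(\tau)$ be a solution defined for all $\tau\ge\tau_0$ which at $\tau_0$ lies in the interior state space, i.e. $\Omega_{(1)}\Omega_{(2)}>0$ and $0<v_{(i)}^2<1$ for $i=1,2$, and satisfies the constraints. Then as $\tau\to+\infty$: $q\to \tfrac12$, $\Omega_{(1)}+\Omega_{(2)}\to 1$, $\Sigma_+,\Sigma_A,\Sigma_B,\Sigma_C\to 0$ and $v_{(1)},v_{(2)}\to 0$; i.e. the solution approaches the line of flat Friedmann–Lemaître fixed points $\Sigma_\pm=\Sigma_A=\Sigma_B=\Sigma_C=0$, $v_{(1)}=v_{(2)}=0$, $\Omega_{(1)}+\Omega_{(2)}=1$.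
   Context: Fix a constant $w\in[0,1)$ (the common equation of state parameter of two perfect fluids, $p_{(i)}=w\rho_{(i)}$). The state variables are real functions of a time $\tau$: $\Sigma_+,\Sigma_A,\Sigma_B,\Sigma_C,v_{(1)},v_{(2)},\Omega_{(1)},\Omega_{(2)}$, with $'$ denoting $d/d\tau$. Define $\Sigma^2=\Sigma_+^2+\Sigma_A^2+\Sigma_B^2+\Sigma_C^2$, $G^{(i)}_\pm=1\pm w v_{(i)}^2$, $Q_{(i)}=(1+w)(G^{(i)}_+)^{-1}v_{(i)}\Omega_{(i)}$, $P_{(i)}=w\Omega_{(i)}+\tfrac13(1-3w)Q_{(i)}v_{(i)}$, $\Omega_m=\Omega_{(1)}+\Omega_{(2)}$, $P_m=P_{(1)}+P_{(2)}$, and $q=2\Sigma^2+\tfrac12(\Omega_m+3P_m)$. The evolution equations are $\Sigma_+'=-(2-q)\Sigma_++3\Sigma_A^2-Q_{(1)}v_{(1)}-Q_{(2)}v_{(2)}$, $\Sigma_A'=-(2-q+3\Sigma_++\sqrt3\Sigma_B)\Sigma_A$, $\Sigma_B'=-(2-q)\Sigma_B+\sqrt3\Sigma_A^2-2\sqrt3\Sigma_C^2$, $\Sigma_C'=-(2-q-2\sqrt3\Sigma_B)\Sigma_C$, $v_{(i)}'=(G^{(i)}_-)^{-1}(1-v_{(i)}^2)(3w-1+2\Sigma_+)v_{(i)}$, $\Omega_{(i)}'=(2q-1-3w)\Omega_{(i)}+(3w-1+2\Sigma_+)Q_{(i)}v_{(i)}$, for $i=1,2$, subject to the constraints $1-\Sigma^2-\Omega_{(1)}-\Omega_{(2)}=0$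 and $Q_{(1)}+Q_{(2)}=0$, with $\Omega_{(i)}\ge0$, $v_{(i)}^2\le 1$. (This describes Bianchi type I cosmologies with two tilted perfect fluids, in expansion-normalized variables.) *)

(* Defs.v *)
From Stdlib Require Import Reals Lra.
Open Scope R_scope.

(* Bianchi I, two tilted perfect fluids, expansion-normalized variables,
   with common equation of state parameter w. *)
Definition Sig2 (Sp SA SB SC : R) : R := Sp^2 + SA^2 + SB^2 + SC^2.
Definition Gp (w v : R) : R := 1 + w * v^2.
Definition Gm (w v : R) : R := 1 - w * v^2.
Definition Qf (w v Om : R) : R := (1 + w) * / Gp w v * v * Om.
Definition Pf (w v Om : R) : R := w * Om + / 3 * (1 - 3 * w) * Qf w v Om * v.
Definition qf (w Sp SA SB SC v1 v2 O1 O2 : R) : R :=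
  2 * Sig2 Sp SA SB SC
  + / 2 * ((O1 + O2) + 3 * (Pf w v1 O1 + Pf w v2 O2)).

Definition tends_to_infty (f : R -> R) (l : R) : Prop :=
  forall eps, 0 < eps -> exists T, forall t, T <= t -> Rabs (f t - l) < eps.

(* Main.v *)
Require Import Defs.
From Stdlib Require Import Reals Lra Psatz Classical.
Open Scope R_scope.

Lemma dpl_eq f x l l' : derivable_pt_lim f x l -> l = l' -> derivable_pt_lim f x l'.
Proof. intros; subst; auto. Qed.
Lemma D_sq f x l : derivable_pt_lim f x l -> derivable_pt_lim (fun t => f t ^ 2) x (2 * f x * l).
Proof. intros H. eapply dpl_eq. apply (derivable_pt_lim_comp f (fun y => y^2)). exact H.
 apply derivable_pt_lim_pow. simpl. ring. Qed.
Lemma D_exp k x : derivable_pt_lim (fun t => exp (k*t)) x (exp (k*x) * k).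
Proof. eapply dpl_eq. apply (derivable_pt_lim_comp (fun t => k*t) exp).
 eapply dpl_eq. apply derivable_pt_lim_scal. apply derivable_pt_lim_id. reflexivity.
 apply derivable_pt_lim_exp. ring. Qed.
Ltac dtac := repeat first [ apply derivable_pt_lim_const | apply D_sq | apply D_exp | apply derivable_pt_lim_minus | apply derivable_pt_lim_plus | apply derivable_pt_lim_opp | apply derivable_pt_lim_mult | eassumption].

Lemma gron_aux (X b : R -> R) (a c k : R) : a < c ->
  (forall t, a<=t<=c -> derivable_pt_lim X t (b t * X t)) ->
  exists d, a < d < c /\
   X c ^2 * exp (k*c) - X a ^2 * exp (k*a) = 2 * (X d ^2 * exp (k*d)) * (b d + k/2) * (c - a)
   /\ 0 <= X d ^2 * exp (k*d).
Proof.
  intros Hlt HD.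
  destruct (MVT_cor2 (fun t => X t ^2 * exp (k*t))
      (fun t => 2 * X t * (b t * X t) * exp (k*t) + X t ^2 * (exp (k*t) * k))
      a c Hlt) as [d [Hd1 Hd2]].
  + intros d Hd. specialize (HD d Hd). eapply dpl_eq; [dtac|cbv beta; ring].
  + exists d. split; auto. cbv beta in Hd1. rewrite Hd1. split. field.
    apply Rmult_le_pos; [nra| left; apply exp_pos].
Qed.

Lemma gron (X b : R -> R) (a c K : R) : a <= c ->
  (forall t, a<=t<=c -> derivable_pt_lim X t (b t * X t)) ->
  (forall t, a <= t <= c -> Rabs (b t) <= K) ->
  X c ^2 * exp (-(2*K)*c) <= X a ^2 * exp (-(2*K)*a) /\
  X a^2 * exp (2*K*a) <= X c^2 * exp(2*K*c).
Proof.
  intros Hac HD HB.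
  destruct (Req_dec a c) as [<-|Hne]; [split; lra|].
  assert (Hlt: a < c) by lra.
  split.
  - destruct (gron_aux X b a c (-(2*K)) Hlt HD) as [d [Hd [H1 H2]]].
    specialize (HB d ltac:(lra)).
    assert (-K <= b d <= K) by (revert HB; unfold Rabs; destruct (Rcase_abs (b d)); lra).
    assert (b d + -(2*K)/2 <= 0) by lra.
    assert (0 <= 2 * (X d ^2 * exp (-(2*K)*d)) * -(b d + -(2*K)/2) * (c - a)).
    { apply Rmult_le_pos; [apply Rmult_le_pos|]; lra. }
    lra.
  - destruct (gron_aux X b a c ((2*K)) Hlt HD) as [d [Hd [H1 H2]]].
    specialize (HB d ltac:(lra)).
    assert (-K <= b d <= K) by (revert HB; unfold Rabs; destruct (Rcase_abs (b d)); lra).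
    assert (0 <= b d + (2*K)/2) by lra.
    assert (0 <= 2 * (X d ^2 * exp ((2*K)*d)) * (b d + (2*K)/2) * (c - a)).
    { apply Rmult_le_pos; [apply Rmult_le_pos|]; lra. }
    lra.
Qed.

Lemma cont_bound b a c : a <= c -> (forall t, a<=t<=c -> continuity_pt b t) ->
  exists K, forall t, a<=t<=c -> Rabs (b t) <= K.
Proof.
  intros Hac Hc.
  destruct (continuity_ab_maj (fun t => Rabs (b t)) a c Hac) as [M [HM _]].
  - intros t Ht. apply (continuity_pt_comp b Rabs). auto. apply Rcontinuity_abs.
  - exists (Rabs (b M)). auto.
Qed.

Lemma dcont X t l : derivable_pt_lim X t l -> continuity_pt X t.
Proof. intros H. apply derivable_continuous_pt. exists l. exact H. Qed.

Lemma lin_zero X b t0 :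
  (forall t, t0<=t -> derivable_pt_lim X t (b t * X t)) ->
  (forall t, t0<=t -> continuity_pt b t) -> X t0 = 0 -> forall t, t0<=t -> X t = 0.
Proof.
  intros HD Hc H0 t Ht.
  destruct (cont_bound b t0 t Ht) as [K HK]. { intros; apply Hc; lra. }
  destruct (gron X b t0 t K Ht) as [H1 _]. { intros; apply HD; lra. } auto.
  rewrite H0 in H1. pose proof (exp_pos (-(2*K)*t)).
  assert (X t ^2 <= 0) by nra. nra.
Qed.

Lemma lin_pos X b t0 :
  (forall t, t0<=t -> derivable_pt_lim X t (b t * X t)) ->
  (forall t, t0<=t -> continuity_pt b t) -> 0 < X t0 -> forall t, t0<=t -> 0 < X t.
Proof.
  intros HD Hc H0 t Ht.
  destruct (Rlt_or_le 0 (X t)) as [|Hn]; auto. exfalso.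
  destruct (prolongement_C0 X t0 t Ht) as [g [Hg Hge]].
  { intros c Hc'. eapply dcont. apply HD. lra. }
  destruct (IVT_cor g t0 t Hg Ht) as [z [Hz Hgz]].
  { rewrite !Hge by lra. nra. }
  rewrite Hge in Hgz by lra.
  destruct (cont_bound b t0 z) as [K HK]. lra. { intros; apply Hc; lra. }
  destruct (gron X b t0 z K) as [_ H1]. lra. { intros; apply HD; lra. } auto.
  rewrite Hgz in H1. pose proof (exp_pos (2*K*t0)).
  assert (X t0 ^2 <= 0) by nra. nra.
Qed.


Lemma barbalat (G P : R -> R) t0 L kap :
  0 < L -> 0 < kap ->
  (forall t, t0 <= t -> G t <= 1) ->
  (forall s t, t0 <= s <= t -> G s <= G t) ->
  (forall t, t0 <= t -> 0 <= P t) ->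
  (forall s t, t0 <= s -> t0 <= t -> Rabs (P s - P t) <= L * Rabs (s - t)) ->
  (forall a b, t0 <= a < b -> exists c, a < c < b /\ kap * P c * (b - a) <= G b - G a) ->
  tends_to_infty P 0.
Proof.
  intros HL Hk HG1 HGm HP0 HPL HMV eps He.
  set (h := eps / (2*L)).
  assert (Hh: 0 < h) by (unfold h; apply Rdiv_lt_0_compat; lra).
  set (del := kap * (eps/2) * h).
  assert (Hdel: 0 < del) by (apply Rmult_lt_0_compat; [apply Rmult_lt_0_compat|]; lra).
  set (E := fun y => exists t, t0 <= t /\ y = G t).
  destruct (completeness E) as [l [Hub Hlub]].
  { unfold bound, is_upper_bound. exists 1. intros y [t [Ht ->]]. auto. }
  { exists (G t0). exists t0. split; [lra|auto]. }
  assert (HT: exists T, t0 <= T /\ l - del < G T).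
  { destruct (classic (exists T, t0 <= T /\ l - del < G T)) as [H|H]; auto.
    exfalso. assert (l <= l - del); [|lra].
    apply Hlub. intros y [t [Ht ->]].
    destruct (Rle_or_lt (G t) (l - del)); auto. exfalso; apply H; exists t; auto. }
  destruct HT as [T [HT0 HT]].
  exists T. intros t Ht.
  rewrite Rminus_0_r, Rabs_pos_eq by (apply HP0; lra).
  destruct (Rlt_or_le (P t) eps) as [|Hge]; auto. exfalso.
  destruct (HMV t (t+h)) as [c [Hc Hc2]]. lra.
  assert (Hl1: G (t+h) <= l) by (apply Hub; exists (t+h); split; [lra|auto]).
  assert (Hl2: G T <= G t) by (apply HGm; lra).
  pose proof (HPL c t ltac:(lra) ltac:(lra)) as HPc.
  rewrite (Rabs_pos_eq (c - t)) in HPc by lra.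
  assert (P t - P c <= L * (c - t)) by (pose proof (Rle_abs (- (P c - P t))); rewrite Rabs_Ropp in *; lra).
  assert (L * (c - t) <= L * h) by (apply Rmult_le_compat_l; lra).
  assert (L * h = eps/2) by (unfold h; field; lra).
  assert (eps/2 <= P c) by lra.
  assert (kap * (eps/2) * h <= kap * P c * h).
  { apply Rmult_le_compat_r; [lra|]. apply Rmult_le_compat_l; lra. }
  replace (t + h - t) with h in Hc2 by ring.
  unfold del in *. lra.
Qed.

Lemma abs_iv x k : Rabs x <= k -> -k <= x <= k.
Proof. unfold Rabs; destruct (Rcase_abs x); lra. Qed.
Lemma ivmul x y a b : -a<=x<=a -> -b<=y<=b -> -(a*b)<=x*y<=a*b.
Proof. intros. nra. Qed.
Lemma ivsq a c k : -1<=a<=1 -> -1<=c<=1 -> -k<=a-c<=k -> -(2*k)<= a^2-c^2 <= 2*k.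
Proof. intros. replace (a^2-c^2) with ((a+c)*(a-c)) by ring.
  replace (2*k) with (2*k) by ring. pose proof (ivmul (a+c) (a-c) 2 k). assert (-2<=a+c<=2) by lra. lra. Qed.
Lemma ivsqm a c b e k : -1<=a<=1 -> -1<=c<=1 -> 0<=b<=1 -> 0<=e<=1 -> -k<=a-c<=k -> -k<=b-e<=k ->
  -(3*k)<= a^2*b-c^2*e <= 3*k.
Proof. intros. replace (a^2*b-c^2*e) with ((a^2-c^2)*b + c^2*(b-e)) by ring.
  pose proof (ivsq a c k). pose proof (ivmul (a^2-c^2) b (2*k) 1). pose proof (ivmul (c^2) (b-e) 1 k).
  assert (0 <= c^2 <= 1) by nra. lra. Qed.
Lemma lip X D t0 M : (forall t, t0<=t -> derivable_pt_lim X t (D t)) -> (forall t, t0 <= t -> -M <= D t <= M) ->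
  forall s t, t0<=s -> t0<=t -> -(M*Rabs(s-t)) <= X s - X t <= M*Rabs(s-t).
Proof.
  intros HD HB s t Hs Ht.
  destruct (Rtotal_order s t) as [H|[H|H]].
  - destruct (MVT_cor2 X D s t H) as [c [Hc1 Hc2]]. intros; apply HD; lra.
    rewrite Rabs_left by lra. pose proof (ivmul (D c) (t - s) M (t-s) (HB c ltac:(lra)) ltac:(lra)). lra.
  - subst. replace (t-t) with 0 by ring. rewrite Rabs_R0. lra.
  - destruct (MVT_cor2 X D t s H) as [c [Hc1 Hc2]]. intros; apply HD; lra.
    rewrite Rabs_right by lra. pose proof (ivmul (D c) (s - t) M (s-t) (HB c ltac:(lra)) ltac:(lra)). lra.
Qed.
Lemma sq_abs x e : 0 < e -> x^2 < e^2 -> Rabs x < e.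
Proof. intros. unfold Rabs; destruct (Rcase_abs x); nra. Qed.
Lemma sqrt3b : 0 <= sqrt 3 <= 2.
Proof. pose proof (sqrt_pos 3). pose proof (sqrt_sqrt 3 ltac:(lra)). nra. Qed.

Lemma tend_le P f l k t0: 0<k -> tends_to_infty P 0 ->
  (forall t, t0<=t -> Rabs (f t - l) <= k*P t) -> tends_to_infty f l.
Proof.
  intros Hk HP Hf eps He. destruct (HP (eps/k)) as [T HT]. apply Rdiv_lt_0_compat; lra.
  exists (Rmax T t0). intros t Ht.
  specialize (HT t (Rle_trans _ _ _ (Rmax_l _ _) Ht)). specialize (Hf t (Rle_trans _ _ _ (Rmax_r _ _) Ht)).
  rewrite Rminus_0_r in HT. pose proof (Rle_abs (P t)).
  assert (k * P t < k * (eps/k)) by (apply Rmult_lt_compat_l; lra).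
  replace (k*(eps/k)) with eps in * by (field; lra). lra.
Qed.
Lemma tend_sq P f k t0: 0<k -> tends_to_infty P 0 ->
  (forall t, t0<=t -> f t^2 <= k*P t) -> tends_to_infty f 0.
Proof.
  intros Hk HP Hf eps He. destruct (HP (eps^2/k)) as [T HT]. apply Rdiv_lt_0_compat; nra.
  exists (Rmax T t0). intros t Ht.
  specialize (HT t (Rle_trans _ _ _ (Rmax_l _ _) Ht)). specialize (Hf t (Rle_trans _ _ _ (Rmax_r _ _) Ht)).
  rewrite Rminus_0_r in *. pose proof (Rle_abs (P t)).
  assert (k * P t < k * (eps^2/k)) by (apply Rmult_lt_compat_l; lra).
  replace (k*(eps^2/k)) with (eps^2) in * by (field; lra). apply sq_abs; lra.
Qed.

Lemma C_sq f x : continuity_pt f x -> continuity_pt (fun t => f t ^ 2) x.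
Proof. intros H. apply (continuity_pt_mult f (fun t => f t ^ 1)); auto.
  apply (continuity_pt_mult f (fun _ => 1)); auto. apply continuity_pt_const. intros a b; reflexivity. Qed.
Lemma C_const c x : continuity_pt (fun _ => c) x.
Proof. apply continuity_pt_const. intros a b; reflexivity. Qed.
Ltac ctac := repeat first [ apply C_const | apply C_sq | apply continuity_pt_minus | apply continuity_pt_plus | apply continuity_pt_opp | apply continuity_pt_mult | eassumption].
Theorem mainTheorem1
  (tau0 : R) (Sp SA SB SC v1 v2 O1 O2 : R -> R) :
  let w := 0 in
  let q t := qf w (Sp t) (SA t) (SB t) (SC t) (v1 t) (v2 t) (O1 t) (O2 t) in
  (forall t, tau0 <= t ->
     derivable_pt_lim Sp t
       (- (2 - q t) * Sp t + 3 * (SA t)^2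
        - Qf w (v1 t) (O1 t) * v1 t - Qf w (v2 t) (O2 t) * v2 t) /\
     derivable_pt_lim SA t
       (- (2 - q t + 3 * Sp t + sqrt 3 * SB t) * SA t) /\
     derivable_pt_lim SB t
       (- (2 - q t) * SB t + sqrt 3 * (SA t)^2 - 2 * sqrt 3 * (SC t)^2) /\
     derivable_pt_lim SC t
       (- (2 - q t - 2 * sqrt 3 * SB t) * SC t) /\
     derivable_pt_lim v1 t
       (/ Gm w (v1 t) * (1 - (v1 t)^2) * (3 * w - 1 + 2 * Sp t) * v1 t) /\
     derivable_pt_lim v2 t
       (/ Gm w (v2 t) * (1 - (v2 t)^2) * (3 * w - 1 + 2 * Sp t) * v2 t) /\
     derivable_pt_lim O1 t
       ((2 * q t - 1 - 3 * w) * O1 t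
        + (3 * w - 1 + 2 * Sp t) * Qf w (v1 t) (O1 t) * v1 t) /\
     derivable_pt_lim O2 t
       ((2 * q t - 1 - 3 * w) * O2 t
        + (3 * w - 1 + 2 * Sp t) * Qf w (v2 t) (O2 t) * v2 t)) ->
  (* at tau0: interior of the state space and constraints *)
  0 < O1 tau0 * O2 tau0 -> 0 <= O1 tau0 -> 0 <= O2 tau0 ->
  0 < (v1 tau0)^2 < 1 -> 0 < (v2 tau0)^2 < 1 ->
  1 - Sig2 (Sp tau0) (SA tau0) (SB tau0) (SC tau0) - O1 tau0 - O2 tau0 = 0 ->
  Qf w (v1 tau0) (O1 tau0) + Qf w (v2 tau0) (O2 tau0) = 0 ->
  tends_to_infty q (/ 2) /\
  tends_to_infty (fun t => O1 t + O2 t) 1 /\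
  tends_to_infty Sp 0 /\ tends_to_infty SA 0 /\
  tends_to_infty SB 0 /\ tends_to_infty SC 0 /\
  tends_to_infty v1 0 /\ tends_to_infty v2 0.
Proof.
  intros w q HD HO12 HO1 HO2 Hv1 Hv2 HC HQ.
  assert (Hgp: forall v, / Gp w v = 1).
  { intro v; unfold Gp, w; replace (1 + 0 * v^2) with 1 by ring; apply Rinv_1. }
  assert (Hgm: forall v, / Gm w v = 1).
  { intro v; unfold Gm, w; replace (1 - 0 * v^2) with 1 by ring; apply Rinv_1. }
  set (qq := fun t => 2*(Sp t^2+SA t^2+SB t^2+SC t^2) + /2*(O1 t+O2 t+(v1 t^2*O1 t+v2 t^2*O2 t))).
  assert (Hq: forall t, q t = qq t).
  { intro t. unfold q, qq, qf, Pf, Sig2, Qf. rewrite !Hgp. unfold w. field. }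
  assert (HDs: forall t, tau0 <= t ->
    derivable_pt_lim Sp t (-(2 - qq t)*Sp t + 3*SA t^2 - v1 t^2*O1 t - v2 t^2*O2 t) /\
    derivable_pt_lim SA t (-(2 - qq t + 3*Sp t + sqrt 3*SB t)*SA t) /\
    derivable_pt_lim SB t (-(2 - qq t)*SB t + sqrt 3*SA t^2 - 2*sqrt 3*SC t^2) /\
    derivable_pt_lim SC t (-(2 - qq t - 2*sqrt 3*SB t)*SC t) /\
    derivable_pt_lim v1 t ((1 - v1 t^2)*(-1+2*Sp t)*v1 t) /\
    derivable_pt_lim v2 t ((1 - v2 t^2)*(-1+2*Sp t)*v2 t) /\
    derivable_pt_lim O1 t ((2*qq t - 1)*O1 t + (-1+2*Sp t)*(v1 t^2*O1 t)) /\
    derivable_pt_lim O2 t ((2*qq t - 1)*O2 t + (-1+2*Sp t)*(v2 t^2*O2 t))).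
  { intros t Ht. destruct (HD t Ht) as (H1&H2&H3&H4&H5&H6&H7&H8).
    rewrite !Hq in H1, H2, H3, H4, H7, H8.
    repeat split; (eapply dpl_eq; [eassumption|]); unfold Qf; rewrite ?Hgp, ?Hgm; unfold w; ring. }
  assert (Hcont: forall t, tau0 <= t -> continuity_pt Sp t /\ continuity_pt SA t /\ continuity_pt SB t /\
     continuity_pt SC t /\ continuity_pt v1 t /\ continuity_pt v2 t /\ continuity_pt O1 t /\ continuity_pt O2 t).
  { intros t Ht; destruct (HDs t Ht) as (H1&H2&H3&H4&H5&H6&H7&H8).
    repeat split; eapply dcont; eassumption. }
  assert (Cqq: forall t, tau0<=t -> continuity_pt qq t).
  { intros t Ht; destruct (Hcont t Ht) as (H1&H2&H3&H4&H5&H6&H7&H8). unfold qq. ctac. }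
  assert (HCz: forall t, tau0 <= t -> 1 - (Sp t^2 + SA t^2 + SB t^2 + SC t^2) - O1 t - O2 t = 0).
  { apply (lin_zero (fun t => 1 - (Sp t^2+SA t^2+SB t^2+SC t^2) - O1 t - O2 t) (fun t => 2 * qq t)).
    - intros t Ht. destruct (HDs t Ht) as (H1&H2&H3&H4&H5&H6&H7&H8).
      eapply dpl_eq; [dtac|]. cbv beta. unfold qq. field.
    - intros t Ht. specialize (Cqq t Ht). destruct (Hcont t Ht) as (H1&H2&H3&H4&H5&H6&H7&H8). ctac.
    - cbv beta. unfold Sig2 in HC. lra. }
  assert (HPq: forall t, tau0 <= t -> 2*qq t - 1 = 3*(Sp t^2 + SA t^2 + SB t^2 + SC t^2) + (v1 t^2*O1 t + v2 t^2*O2 t)).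
  { intros t Ht. specialize (HCz t Ht). unfold qq. lra. }
  assert (HO1p: forall t, tau0<=t -> 0 < O1 t).
  { apply (lin_pos O1 (fun t => (2*qq t - 1) + (-1+2*Sp t)*v1 t^2)).
    - intros t Ht. destruct (HDs t Ht) as (H1&H2&H3&H4&H5&H6&H7&H8). eapply dpl_eq; [eassumption|]. ring.
    - intros t Ht. specialize (Cqq t Ht). destruct (Hcont t Ht) as (H1&H2&H3&H4&H5&H6&H7&H8). ctac.
    - nra. }
  assert (HO2p: forall t, tau0<=t -> 0 < O2 t).
  { apply (lin_pos O2 (fun t => (2*qq t - 1) + (-1+2*Sp t)*v2 t^2)).
    - intros t Ht. destruct (HDs t Ht) as (H1&H2&H3&H4&H5&H6&H7&H8). eapply dpl_eq; [eassumption|]. ring.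
    - intros t Ht. specialize (Cqq t Ht). destruct (Hcont t Ht) as (H1&H2&H3&H4&H5&H6&H7&H8). ctac.
    - nra. }
  set (G1 := fun t => O1 t^2 * (1 - v1 t^2)).
  set (G2 := fun t => O2 t^2 * (1 - v2 t^2)).
  assert (DG1: forall t, tau0<=t -> derivable_pt_lim G1 t (2*(2*qq t - 1) * G1 t)).
  { intros t Ht. destruct (HDs t Ht) as (H1&H2&H3&H4&H5&H6&H7&H8). unfold G1.
    eapply dpl_eq; [dtac|]. cbv beta. ring. }
  assert (DG2: forall t, tau0<=t -> derivable_pt_lim G2 t (2*(2*qq t - 1) * G2 t)).
  { intros t Ht. destruct (HDs t Ht) as (H1&H2&H3&H4&H5&H6&H7&H8). unfold G2.
    eapply dpl_eq; [dtac|]. cbv beta. ring. }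
  assert (HG1p: forall t, tau0<=t -> 0 < G1 t).
  { apply (lin_pos G1 (fun t => 2*(2*qq t - 1))). exact DG1.
    - intros t Ht. specialize (Cqq t Ht). destruct (Hcont t Ht) as (H1&H2&H3&H4&H5&H6&H7&H8). ctac.
    - unfold G1. pose proof (HO1p tau0 (Rle_refl _)). destruct Hv1. apply Rmult_lt_0_compat; nra. }
  assert (HG2p: forall t, tau0<=t -> 0 < G2 t).
  { apply (lin_pos G2 (fun t => 2*(2*qq t - 1))). exact DG2.
    - intros t Ht. specialize (Cqq t Ht). destruct (Hcont t Ht) as (H1&H2&H3&H4&H5&H6&H7&H8). ctac.
    - unfold G2. pose proof (HO2p tau0 (Rle_refl _)). destruct Hv2. apply Rmult_lt_0_compat; nra. }
  assert (Hb: forall t, tau0 <= t -> 0 < O1 t <= 1 /\ 0 < O2 t <= 1 /\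
     -1 <= Sp t <= 1 /\ -1 <= SA t <= 1 /\ -1 <= SB t <= 1 /\ -1 <= SC t <= 1 /\
     -1 <= v1 t <= 1 /\ -1 <= v2 t <= 1 /\ 0 <= v1 t^2*O1 t <= 1 /\ 0 <= v2 t^2*O2 t <= 1 /\
     1/2 <= qq t <= 2 /\ v1 t^2 * O1 t <= O1 t /\ v2 t^2 * O2 t <= O2 t).
  { intros t Ht. specialize (HCz t Ht). specialize (HPq t Ht). specialize (HO1p t Ht). specialize (HO2p t Ht).
    specialize (HG1p t Ht). specialize (HG2p t Ht). unfold G1, G2 in *.
    assert (v1 t^2 < 1) by nra. assert (v2 t^2 < 1) by nra.
    assert (0 <= Sp t^2) by nra. assert (0 <= SA t^2) by nra. assert (0 <= SB t^2) by nra. assert (0 <= SC t^2) by nra.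
    assert (0 <= v1 t^2) by nra. assert (0 <= v2 t^2) by nra.
    assert (0 <= v1 t^2 * O1 t) by nra. assert (0 <= v2 t^2 * O2 t) by nra.
    assert (v1 t^2 * O1 t <= O1 t) by nra. assert (v2 t^2 * O2 t <= O2 t) by nra.
    repeat split; nra. }
  assert (HG1m: forall s t, tau0 <= s <= t -> G1 s <= G1 t).
  { intros s t [Hs Hst]. destruct (Req_dec s t) as [->|Hne]; [lra|].
    destruct (MVT_cor2 G1 (fun c => 2*(2*qq c - 1)*G1 c) s t) as [c [Hc1 Hc2]]; [lra| intros; apply DG1; lra |].
    specialize (HPq c ltac:(lra)). specialize (HG1p c ltac:(lra)). destruct (Hb c ltac:(lra)) as (B1&B2&B3&B4&B5&B6&B7&B8&B9&B10&B11&B12&B13).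
    assert (0 <= 2*(2*qq c - 1)*G1 c) by (apply Rmult_le_pos; lra). nra. }
  set (P := fun t => 3*(Sp t^2 + SA t^2 + SB t^2 + SC t^2) + (v1 t^2*O1 t + v2 t^2*O2 t)).
  assert (HDb: forall t, tau0 <= t ->
    -20 <= -(2 - qq t)*Sp t + 3*SA t^2 - v1 t^2*O1 t - v2 t^2*O2 t <= 20 /\
    -20 <= -(2 - qq t + 3*Sp t + sqrt 3*SB t)*SA t <= 20 /\
    -20 <= -(2 - qq t)*SB t + sqrt 3*SA t^2 - 2*sqrt 3*SC t^2 <= 20 /\
    -20 <= -(2 - qq t - 2*sqrt 3*SB t)*SC t <= 20 /\
    -20 <= (1 - v1 t^2)*(-1+2*Sp t)*v1 t <= 20 /\
    -20 <= (1 - v2 t^2)*(-1+2*Sp t)*v2 t <= 20 /\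
    -20 <= (2*qq t - 1)*O1 t + (-1+2*Sp t)*(v1 t^2*O1 t) <= 20 /\
    -20 <= (2*qq t - 1)*O2 t + (-1+2*Sp t)*(v2 t^2*O2 t) <= 20).
  { intros t Ht. destruct (Hb t Ht) as (B1&B2&B3&B4&B5&B6&B7&B8&B9&B10&B11&B12&B13). pose proof sqrt3b as Hs3.
    assert (-1 <= SA t^2 <= 1) by nra. assert (-1 <= SC t^2 <= 1) by nra.
    assert (-1 <= v1 t^2 <= 1) by nra. assert (-1 <= v2 t^2 <= 1) by nra.
    pose proof (ivmul (2-qq t) (Sp t) 2 1 ltac:(lra) ltac:(lra)).
    pose proof (ivmul (2-qq t) (SB t) 2 1 ltac:(lra) ltac:(lra)).
    pose proof (ivmul (sqrt 3) (SB t) 2 1 ltac:(lra) ltac:(lra)).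
    pose proof (ivmul (sqrt 3) (SA t^2) 2 1 ltac:(lra) ltac:(lra)).
    pose proof (ivmul (sqrt 3) (SC t^2) 2 1 ltac:(lra) ltac:(lra)).
    pose proof (ivmul (2 - qq t + 3*Sp t + sqrt 3*SB t) (SA t) 7 1 ltac:(lra) ltac:(lra)).
    pose proof (ivmul (2 - qq t - 2*sqrt 3*SB t) (SC t) 7 1 ltac:(lra) ltac:(lra)).
    pose proof (ivmul (1 - v1 t^2) (-1+2*Sp t) 2 3 ltac:(lra) ltac:(lra)).
    pose proof (ivmul (1 - v2 t^2) (-1+2*Sp t) 2 3 ltac:(lra) ltac:(lra)).
    pose proof (ivmul ((1 - v1 t^2)*(-1+2*Sp t)) (v1 t) (2*3) 1 ltac:(lra) ltac:(lra)).
    pose proof (ivmul ((1 - v2 t^2)*(-1+2*Sp t)) (v2 t) (2*3) 1 ltac:(lra) ltac:(lra)).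
    pose proof (ivmul (2*qq t - 1) (O1 t) 3 1 ltac:(lra) ltac:(lra)).
    pose proof (ivmul (2*qq t - 1) (O2 t) 3 1 ltac:(lra) ltac:(lra)).
    pose proof (ivmul (-1+2*Sp t) (v1 t^2*O1 t) 3 1 ltac:(lra) ltac:(lra)).
    pose proof (ivmul (-1+2*Sp t) (v2 t^2*O2 t) 3 1 ltac:(lra) ltac:(lra)).
    repeat split; lra. }
  assert (HL: forall s t, tau0 <= s -> tau0 <= t ->
     let k := 20 * Rabs (s - t) in
     -k <= Sp s - Sp t <= k /\ -k <= SA s - SA t <= k /\ -k <= SB s - SB t <= k /\ -k <= SC s - SC t <= k /\
     -k <= v1 s - v1 t <= k /\ -k <= v2 s - v2 t <= k /\ -k <= O1 s - O1 t <= k /\ -k <= O2 s - O2 t <= k).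
  { intros s t Hs Ht k. unfold k.
    repeat match goal with |- (_ <= _ <= _) /\ _ => split end.
    all: match goal with |- context [?X ?s1 - ?X ?t1] =>
      first
      [ apply (lip X (fun c => -(2 - qq c)*Sp c + 3*SA c^2 - v1 c^2*O1 c - v2 c^2*O2 c) tau0 20); auto;
          intros c Hc; destruct (HDs c Hc) as (H1&H2&H3&H4&H5&H6&H7&H8); destruct (HDb c Hc) as (J1&J2&J3&J4&J5&J6&J7&J8); assumption
      | apply (lip X (fun c => -(2 - qq c + 3*Sp c + sqrt 3*SB c)*SA c) tau0 20); auto;
          intros c Hc; destruct (HDs c Hc) as (H1&H2&H3&H4&H5&H6&H7&H8); destruct (HDb c Hc) as (J1&J2&J3&J4&J5&J6&J7&J8); assumption
      | apply (lip X (fun c => -(2 - qq c)*SB c + sqrt 3*SA c^2 - 2*sqrt 3*SC c^2) tau0 20); auto;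
          intros c Hc; destruct (HDs c Hc) as (H1&H2&H3&H4&H5&H6&H7&H8); destruct (HDb c Hc) as (J1&J2&J3&J4&J5&J6&J7&J8); assumption
      | apply (lip X (fun c => -(2 - qq c - 2*sqrt 3*SB c)*SC c) tau0 20); auto;
          intros c Hc; destruct (HDs c Hc) as (H1&H2&H3&H4&H5&H6&H7&H8); destruct (HDb c Hc) as (J1&J2&J3&J4&J5&J6&J7&J8); assumption
      | apply (lip X (fun c => (1 - v1 c^2)*(-1+2*Sp c)*v1 c) tau0 20); auto;
          intros c Hc; destruct (HDs c Hc) as (H1&H2&H3&H4&H5&H6&H7&H8); destruct (HDb c Hc) as (J1&J2&J3&J4&J5&J6&J7&J8); assumption
      | apply (lip X (fun c => (1 - v2 c^2)*(-1+2*Sp c)*v2 c) tau0 20); auto;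
          intros c Hc; destruct (HDs c Hc) as (H1&H2&H3&H4&H5&H6&H7&H8); destruct (HDb c Hc) as (J1&J2&J3&J4&J5&J6&J7&J8); assumption
      | apply (lip X (fun c => (2*qq c - 1)*O1 c + (-1+2*Sp c)*(v1 c^2*O1 c)) tau0 20); auto;
          intros c Hc; destruct (HDs c Hc) as (H1&H2&H3&H4&H5&H6&H7&H8); destruct (HDb c Hc) as (J1&J2&J3&J4&J5&J6&J7&J8); assumption
      | apply (lip X (fun c => (2*qq c - 1)*O2 c + (-1+2*Sp c)*(v2 c^2*O2 c)) tau0 20); auto;
          intros c Hc; destruct (HDs c Hc) as (H1&H2&H3&H4&H5&H6&H7&H8); destruct (HDb c Hc) as (J1&J2&J3&J4&J5&J6&J7&J8); assumption ]
    end. }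
  assert (HPL: forall s t, tau0 <= s -> tau0 <= t -> Rabs (P s - P t) <= 1000 * Rabs (s - t)).
  { intros s t Hs Ht. destruct (HL s t Hs Ht) as (L1&L2&L3&L4&L5&L6&L7&L8).
    destruct (Hb s Hs) as (B1&B2&B3&B4&B5&B6&B7&B8&B9&B10&B11&B12&B13).
    destruct (Hb t Ht) as (C1&C2&C3&C4&C5&C6&C7&C8&C9&C10&C11&C12&C13).
    pose proof (Rabs_pos (s - t)).
    pose proof (ivsq _ _ _ B3 C3 L1). pose proof (ivsq _ _ _ B4 C4 L2).
    pose proof (ivsq _ _ _ B5 C5 L3). pose proof (ivsq _ _ _ B6 C6 L4).
    pose proof (ivsqm (v1 s) (v1 t) (O1 s) (O1 t) _ B7 C7 ltac:(lra) ltac:(lra) L5 L7).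
    pose proof (ivsqm (v2 s) (v2 t) (O2 s) (O2 t) _ B8 C8 ltac:(lra) ltac:(lra) L6 L8).
    apply Rabs_le. unfold P. lra. }
  assert (Hg1: 0 < G1 tau0) by (apply HG1p; lra).
  assert (HPt: tends_to_infty P 0).
  { apply (barbalat G1 P tau0 1000 (2 * G1 tau0)); try lra.
    - intros t Ht. destruct (Hb t Ht) as (B1&B2&B3&B4&B5&B6&B7&B8&B9&B10&B11&B12&B13).
      unfold G1. assert (0 <= v1 t^2) by nra. assert (O1 t^2 <= 1) by nra. nra.
    - exact HG1m.
    - intros t Ht. destruct (Hb t Ht) as (B1&B2&B3&B4&B5&B6&B7&B8&B9&B10&B11&B12&B13).
      unfold P. nra.
    - exact HPL.
    - intros a b [Ha Hab].
      destruct (MVT_cor2 G1 (fun c => 2*(2*qq c - 1)*G1 c) a b) as [c [Hc1 Hc2]]; [lra| intros; apply DG1; lra |].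
      exists c. split; auto.
      rewrite Hc1. rewrite (HPq c) by lra. fold (P c).
      assert (0 <= P c) by (destruct (Hb c ltac:(lra)) as (B1&B2&B3&B4&B5&B6&B7&B8&B9&B10&B11&B12&B13); unfold P; nra).
      assert (G1 tau0 <= G1 c) by (apply HG1m; lra).
      assert (0 <= 2 * P c * (b - a) * (G1 c - G1 tau0)).
      { apply Rmult_le_pos; [apply Rmult_le_pos|]; [apply Rmult_le_pos| |]; lra. }
      lra. }
  split; [|split; [|split; [|split; [|split; [|split; [|split]]]]]].
  - apply (tend_le P q (/2) 1 tau0); try lra; auto.
    intros t Ht. rewrite Hq. pose proof (HPq t Ht).
    destruct (Hb t Ht) as (B1&B2&B3&B4&B5&B6&B7&B8&B9&B10&B11&B12&B13).
    assert (0 <= P t) by (unfold P; nra).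
    apply Rabs_le. unfold P in *. lra.
  - apply (tend_le P (fun t => O1 t + O2 t) 1 1 tau0); try lra; auto.
    intros t Ht. pose proof (HCz t Ht).
    destruct (Hb t Ht) as (B1&B2&B3&B4&B5&B6&B7&B8&B9&B10&B11&B12&B13).
    assert (0 <= Sp t^2 + SA t^2 + SB t^2 + SC t^2) by nra.
    apply Rabs_le. unfold P in *. lra.
  - apply (tend_sq P Sp 1 tau0); try lra; auto.
    intros t Ht. destruct (Hb t Ht) as (B1&B2&B3&B4&B5&B6&B7&B8&B9&B10&B11&B12&B13). unfold P. nra.
  - apply (tend_sq P SA 1 tau0); try lra; auto.
    intros t Ht. destruct (Hb t Ht) as (B1&B2&B3&B4&B5&B6&B7&B8&B9&B10&B11&B12&B13). unfold P. nra.
  - apply (tend_sq P SB 1 tau0); try lra; auto.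
    intros t Ht. destruct (Hb t Ht) as (B1&B2&B3&B4&B5&B6&B7&B8&B9&B10&B11&B12&B13). unfold P. nra.
  - apply (tend_sq P SC 1 tau0); try lra; auto.
    intros t Ht. destruct (Hb t Ht) as (B1&B2&B3&B4&B5&B6&B7&B8&B9&B10&B11&B12&B13). unfold P. nra.
  - apply (tend_sq P v1 (/ G1 tau0) tau0); [apply Rinv_0_lt_compat; lra|auto|].
    intros t Ht. destruct (Hb t Ht) as (B1&B2&B3&B4&B5&B6&B7&B8&B9&B10&B11&B12&B13).
    assert (G1 tau0 <= G1 t) by (apply HG1m; lra).
    assert (G1 t <= O1 t) by (unfold G1; assert (0 <= v1 t^2) by nra; nra).
    assert (v1 t^2 * G1 tau0 <= P t) by (unfold P; assert (0 <= v1 t^2) by nra; nra).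
    apply (Rmult_le_reg_l (G1 tau0)); auto.
    rewrite <- Rmult_assoc, Rinv_r, Rmult_1_l by lra. lra.
  - apply (tend_sq P v2 (/ G2 tau0) tau0); [apply Rinv_0_lt_compat; apply HG2p; lra|auto|].
    intros t Ht. destruct (Hb t Ht) as (B1&B2&B3&B4&B5&B6&B7&B8&B9&B10&B11&B12&B13).
    assert (Hg2: 0 < G2 tau0) by (apply HG2p; lra).
    assert (G2 tau0 <= G2 t).
    { destruct (Req_dec tau0 t) as [->|Hne]; [lra|].
      destruct (MVT_cor2 G2 (fun c => 2*(2*qq c - 1)*G2 c) tau0 t) as [c [Hc1 Hc2]]; [lra| intros; apply DG2; lra |].
      specialize (HPq c ltac:(lra)). specialize (HG2p c ltac:(lra)). destruct (Hb c ltac:(lra)) as (D1&D2&D3&D4&D5&D6&D7&D8&D9&D10&D11&D12&D13).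
      assert (0 <= 2*(2*qq c - 1)*G2 c) by (apply Rmult_le_pos; lra). nra. }
    assert (G2 t <= O2 t) by (unfold G2; assert (0 <= v2 t^2) by nra; nra).
    assert (v2 t^2 * G2 tau0 <= P t) by (unfold P; assert (0 <= v2 t^2) by nra; nra).
    apply (Rmult_le_reg_l (G2 tau0)); auto.
    rewrite <- Rmult_assoc, Rinv_r, Rmult_1_l by lra. lra.
Qed.
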